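(* Assume Assumptions 1 and 2 for some $\delta>0$. For any distinct $u_1,u_2\in L$, as $n_R\to\infty$, $$\Pr[(u_1,u_2)\in E\mid S_L,S_R]=p_{u_1u_2}-\frac{p_{u_1u_2}^2}{2}+\left(\frac{p_{u_1u_2}}{6}+\frac{M_{R4}}{2n_RM_{R2}^2}\right)p_{u_1u_2}^2\,(1+O(n_R^{-2\delta})),$$ where $p_{u_1u_2}=\frac{M_{R2}}{M_{R1}^2}\cdot\frac{w_{u_1}w_{u_2}}{n_R}$. In particular $p_{u_1u_2}=O(n_R^{-2\delta})=o(1)$, so the projected graph is sparse.
   Context: Model: left nodes $L$ ($|L|=n_L$), right nodes $R$ ($|R|=n_R$), weight sequences $S_L=(w_u)_{u\in L}$, $S_R=(w_v)_{v\in R}$ of positive reals; $M_{Lk}=\frac1{n_L}\sum_{u\in L}w_u^k$, $M_{Rk}=\frac1{n_R}\sum_{v\in R}w_v^k$. The random bipartite graph $G_b=(L\sqcup R,E_b)$ contains each edge $(u,v)$, $u\in L$, $v\in R$, independently with probability $\min\left(\frac{w_uw_v}{n_RM_{R1}},1\right)$. The projected graph is $G=(L,E)$ with $(u,u')\in E$ for distinct $u,u'\in L$ iff there is $z\in R$ with $(u,z),(u',z)\in E_b$ (a single edge regardless of how many such $z$). Assumption 1: $\frac{w_uw_v}{n_RM_{R1}}\le1$ for all $u\in L,v\in R$. Assumption 2 (parameter $\delta>0$), as $n_L,n_R\to\infty$: $\max(S_L\cup S_R)=O(n_R^{1/2-\delta})$, $\min S_L=\Omega(1)$, $M_{R2}=O(M_{R1}^2)$,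 $M_{R4}=O(n_R^{1-2\delta})$. *)

(* Defs.v *)
From HB Require Import structures.
From mathcomp Require Import all_boot all_order all_algebra.
From mathcomp Require Import reals exp.
Set Implicit Arguments. Unset Strict Implicit. Unset Printing Implicit Defensive.
Import Order.TTheory GRing.Theory Num.Theory.
Local Open Scope ring_scope.

Section Model.
Variable R : realType.

Definition moment (n : nat) (w : 'I_n -> R) (k : nat) : R :=
  (\sum_(i < n) w i ^+ k) / n%:R.

Definition edge_prob (nL nR : nat) (wL : 'I_nL -> R) (wR : 'I_nR -> R)
  (e : 'I_nL * 'I_nR) : R :=
  Num.min (wL e.1 * wR e.2 / (nR%:R * moment wR 1)) 1.

Definition graph_prob (nL nR : nat) (wL : 'I_nL -> R) (wR : 'I_nR -> R)
  (Eb : {set 'I_nL * 'I_nR}) : R :=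
  \prod_(e : 'I_nL * 'I_nR)
     (if e \in Eb then edge_prob wL wR e else 1 - edge_prob wL wR e).

Definition proj_edge (nL nR : nat) (Eb : {set 'I_nL * 'I_nR}) (u1 u2 : 'I_nL)
  : bool :=
  (u1 != u2) && [exists z : 'I_nR, ((u1, z) \in Eb) && ((u2, z) \in Eb)].

(* Pr[(u1,u2) in E | S_L, S_R] : the weights are fixed, randomness is G_b *)
Definition proj_edge_prob (nL nR : nat) (wL : 'I_nL -> R) (wR : 'I_nR -> R)
  (u1 u2 : 'I_nL) : R :=
  \sum_(Eb : {set 'I_nL * 'I_nR} | proj_edge Eb u1 u2) graph_prob wL wR Eb.

Definition p_pair (nL nR : nat) (wL : 'I_nL -> R) (wR : 'I_nR -> R)
  (u1 u2 : 'I_nL) : R :=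
  moment wR 2 / moment wR 1 ^+ 2 * (wL u1 * wL u2 / nR%:R).

End Model.

Definition eventually (P : nat -> Prop) : Prop := exists K, forall k, (K <= k)%N -> P k.
Definition nat_to_infty (n : nat -> nat) : Prop :=
  forall N, eventually (fun k => (N <= n k)%N).

(* Main.v *)
Require Import Defs.
From HB Require Import structures.
From mathcomp Require Import all_boot all_order all_algebra.
From mathcomp Require Import reals exp.
From mathcomp Require Import ring lra.
Import Order.TTheory GRing.Theory Num.Theory.
Local Open Scope ring_scope.

Section Bonf.
Variable R : realType.

Definition SS2 (a b : R) := a - (a ^+ 2 - b) / 2.
Definition SS3 (a b c : R) := SS2 a b + (a ^+ 3 - 3 * a * b + 2 * c) / 6.

Definition binv (a b c P : R) :=
  [/\ 0 <= P, P <= 1, 0 <= a, 0 <= b &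
   [/\ 0 <= c, c <= a * b, 1 - P <= a, SS2 a b <= 1 - P &
   (1 - P <= SS3 a b c /\ SS3 a b c - a ^+ 4 / 24 <= 1 - P)]].

Lemma binv_step (a b c P x : R) : 0 <= x <= 1 -> binv a b c P ->
  binv (x + a) (x ^+ 2 + b) (x ^+ 3 + c) ((1 - x) * P).
Proof.
move=> /andP[x0 x1] [P0 P1 a0 b0 [c0 cab U1 L2 [U3 L4]]].
rewrite /binv /SS3 /SS2 in U3 L2 L4 *.
have e3 : a ^+ 3 - 3 * a * b + 2 * c <= a ^+ 3 by nra.
have h4 : 4 * a ^+ 3 * x <= (x + a) ^+ 4 - a ^+ 4.
  have : 0 <= x * (6 * a ^+ 2 * x + 4 * a * x ^+ 2 + x ^+ 3).
    apply: mulr_ge0 => //; nra.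
  move=> h; nra.
have xP : 0 <= x * P by apply: mulr_ge0.
have xP1 : x * P <= x by rewrite -[leRHS]mulr1 ler_wpM2l.
have h2 : 0 <= x * (P - (1 - a)) by apply: mulr_ge0 => //; lra.
have h3 : 0 <= x * (1 - (a - (a ^+ 2 - b) / 2) - P) by apply: mulr_ge0 => //; lra.
have h5 : 0 <= x * (P - (1 - (a - (a ^+ 2 - b) / 2 + (a ^+ 3 - 3 * a * b + 2 * c) / 6))).
  by apply: mulr_ge0 => //; lra.
have h6 : x * (a ^+ 3 - 3 * a * b + 2 * c) <= x * a ^+ 3 by rewrite ler_wpM2l.
have x3 : 0 <= x ^+ 3 by rewrite exprn_ge0.
have h7 : 0 <= x * b by apply: mulr_ge0.
have h8 : 0 <= a * x ^+ 2 by apply: mulr_ge0 => //; rewrite exprn_ge0.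
have x2 : 0 <= x ^+ 2 by rewrite exprn_ge0.
have h0 : 0 <= (1 - x) * P by apply: mulr_ge0 => //; lra.
split; [lra | lra | lra | lra | split].
- lra.
- nra.
- nra.
- nra.
- split; nra.
Qed.

Lemma bonf (I : Type) (r : seq I) (x : I -> R) : (forall i, 0 <= x i <= 1) ->
  binv (\sum_(i <- r) x i) (\sum_(i <- r) x i ^+ 2) (\sum_(i <- r) x i ^+ 3)
       (\prod_(i <- r) (1 - x i)).
Proof.
move=> hx; elim: r => [|i r IH].
  rewrite !big_nil /binv /SS3 /SS2; split; try lra; split; try lra; split; lra.
rewrite !big_cons; exact: binv_step.
Qed.
End Bonf.
Section Comb.
Variable R : realType.

Lemma L1 (T : finType) (F : T -> bool -> R) :
  \sum_(A : {set T}) \prod_(e : T) F e (e \in A) = \prod_(e : T) (F e true + F e false).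
Proof.
rewrite (bigA_distr _ _ (fun e => F e true) (fun e => F e false)).
apply: eq_bigr => A _; apply: eq_bigr => e _; by case: (e \in A).
Qed.

Lemma prod_two (n : nat) (u1 u2 : 'I_n) (h : 'I_n -> R) : u1 != u2 ->
  (forall u, u != u1 -> u != u2 -> h u = 1) -> \prod_u h u = h u1 * h u2.
Proof.
move=> ne hh; rewrite (bigD1 u1) //= (bigD1 u2) /=; last by rewrite eq_sym.
rewrite big1 ?mulr1 // => u /andP[h1 h2]; exact: hh.
Qed.

Variables (nL nR : nat) (q : 'I_nL * 'I_nR -> R) (u1 u2 : 'I_nL).
Hypothesis ne : u1 != u2.
Let ne' : (u2 == u1) = false. Proof. by rewrite eq_sym (negbTE ne). Qed.

Let W (A : {set 'I_nL * 'I_nR}) := \prod_e (if e \in A then q e else 1 - q e).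
Let y (z : 'I_nR) (A : {set 'I_nL * 'I_nR}) : R :=
  ((u1, z) \in A)%:R * ((u2, z) \in A)%:R.
Let g (S : {set 'I_nR}) (e : 'I_nL * 'I_nR) (b : bool) : R :=
  if e.2 \in S then (if e.1 == u1 then - b%:R else if e.1 == u2 then b%:R else 1)
  else 1.

Lemma prod_pairs (G : 'I_nL * 'I_nR -> R) :
  \prod_e G e = \prod_(z : 'I_nR) \prod_(u : 'I_nL) G (u, z).
Proof.
rewrite exchange_big /= pair_bigA /=; apply: eq_bigr => -[u z] _ //.
Qed.

Lemma claim1 (S : {set 'I_nR}) (A : {set 'I_nL * 'I_nR}) : \prod_z (if z \in S then - y z A else 1) = \prod_e g S e (e \in A).
Proof.
rewrite prod_pairs; apply: eq_bigr => z _.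
rewrite (@prod_two nL u1 u2 (fun u => g S (u, z) ((u, z) \in A))) //.
- rewrite /g /=; case: (z \in S); last by rewrite mulr1.
  rewrite !eqxx ne' /y; ring.
- by move=> u h1 h2; rewrite /g /= (negbTE h1) (negbTE h2); case: (z \in S).
Qed.

Lemma claim3 (S : {set 'I_nR}) : \sum_A W A * \prod_z (if z \in S then - y z A else 1) =
  \prod_z (if z \in S then - (q (u1, z) * q (u2, z)) else 1).
Proof.
transitivity (\sum_(A : {set 'I_nL * 'I_nR}) \prod_e ((if e \in A then q e else 1 - q e) * g S e (e \in A))).
  by apply: eq_bigr => A _; rewrite claim1 /W -big_split.
rewrite (@L1 _ (fun e b => (if b then q e else 1 - q e) * g S e b)) /= prod_pairs.
apply: eq_bigr => z _.
rewrite (@prod_two nL u1 u2 (fun u => q (u, z) * g S (u, z) true + (1 - q (u, z)) * g S (u, z) false)) //.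
- rewrite /g /=; case: (z \in S); last by ring.
  rewrite !eqxx ne'; ring.
- by move=> u h1 h2; rewrite /g /= (negbTE h1) (negbTE h2); case: (z \in S) => /=; ring.
Qed.

Lemma proj_prob :
  \sum_(A : {set 'I_nL * 'I_nR} | proj_edge A u1 u2) W A =
  1 - \prod_z (1 - q (u1, z) * q (u2, z)).
Proof.
have tot : \sum_A W A = 1.
  rewrite /W (@L1 _ (fun e b => if b then q e else 1 - q e)) big1 // => e _; ring.
have non : \sum_(A | ~~ proj_edge A u1 u2) W A = \prod_z (1 - q (u1, z) * q (u2, z)).
  transitivity (\sum_A W A * \prod_z (1 - y z A)).
    rewrite big_mkcond; apply: eq_bigr => A _.
    rewrite /proj_edge ne /=.
    case: existsP => [[z /andP[h1 h2]]|hn] /=.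
      by rewrite (bigD1 z) //= /y h1 h2 /= mulr1 subrr mul0r mulr0.
    rewrite big1 ?mulr1 // => z _; rewrite /y.
    case h1: ((u1, z) \in A); case h2: ((u2, z) \in A) => //=; try ring.
    by case: hn; exists z; rewrite h1 h2.
  transitivity (\sum_A W A * \sum_(S : {set 'I_nR}) \prod_z (if z \in S then - y z A else 1)).
    apply: eq_bigr => A _; congr (_ * _).
    rewrite -(bigA_distr _ _ (fun z => - y z A) (fun z => 1)); apply: eq_bigr => z _.
  by rewrite /= addrC.
  transitivity (\sum_(A : {set 'I_nL * 'I_nR}) \sum_(S : {set 'I_nR}) W A * \prod_z (if z \in S then - y z A else 1)).
    by apply: eq_bigr => A _; rewrite mulr_sumr.
  rewrite exchange_big /=.
  transitivity (\sum_(S : {set 'I_nR}) \prod_z (if z \in S then - (q (u1, z) * q (u2, z)) else 1)).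
    by apply: eq_bigr => S _; rewrite claim3.
  rewrite -(bigA_distr _ _ (fun z => - (q (u1, z) * q (u2, z))) (fun z => 1)).
  by apply: eq_bigr => z _; rewrite /= addrC.
rewrite -non -tot [X in _ = X - _](bigID (fun A => proj_edge A u1 u2)) /= addrK.
by [].
Qed.
End Comb.

Section Core.
Variable R : realType.

Lemma core (nl n : nat) (wl : 'I_nl -> R) (wr : 'I_n -> R) (v1 v2 : 'I_nl) (C2 : R) :
  (0 < n)%N -> (forall u, 0 < wl u) -> (forall z, 0 < wr z) ->
  (forall u z, wl u * wr z / (n%:R * moment wr 1) <= 1) ->
  moment wr 2 <= C2 * moment wr 1 ^+ 2 -> v1 != v2 ->
  let rho := wl v1 * wl v2 * C2 / n%:R in
  let p := p_pair wl wr v1 v2 in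
  let B := (p / 6 + moment wr 4 / (2 * n%:R * moment wr 2 ^+ 2)) * p ^+ 2 in
  [/\ `| proj_edge_prob wl wr v1 v2 - (p - p ^+ 2 / 2) - B | <= 2 * rho * B,
      0 <= B & p <= rho].
Proof.
move=> n0 wlp wrp hA1 hM2 ne rho p B.
set S1 := \sum_(i < n) wr i ^+ 1.
set S2 := \sum_(i < n) wr i ^+ 2.
set S4 := \sum_(i < n) wr i ^+ 4.
have nn0 : 0 < (n%:R : R) by rewrite ltr0n.
have Sp (k : nat) : 0 < \sum_(i < n) wr i ^+ k.
  rewrite (bigD1 (Ordinal n0)) //=; apply: ltr_pwDl; first exact: exprn_gt0.
  by apply: sumr_ge0 => i _; rewrite exprn_ge0 // ltW.
have S1p : 0 < S1 := Sp 1%N.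
have S2p : 0 < S2 := Sp 2%N.
have S4p : 0 < S4 := Sp 4%N.
have hM1 : n%:R * moment wr 1 = S1 by rewrite /moment -/S1; field; rewrite gt_eqF.
set L := wl v1 * wl v2 / S1 ^+ 2.
have Lp : 0 < L by rewrite /L divr_gt0 ?mulr_gt0 ?exprn_gt0.
pose x z := wl v1 * wr z / (n%:R * moment wr 1) * (wl v2 * wr z / (n%:R * moment wr 1)).
have xE z : x z = L * wr z ^+ 2 by rewrite /x hM1 /L; field; rewrite gt_eqF.
have x01 z : 0 <= x z <= 1.
  apply/andP; split; first by rewrite xE; apply: mulr_ge0; [exact: ltW | apply: exprn_ge0; exact: ltW].
  have q0 u : 0 <= wl u * wr z / (n%:R * moment wr 1).
    by rewrite hM1 divr_ge0 // ltW // mulr_gt0.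
  by rewrite /x -[leRHS](mulr1 1); apply: ler_pM.
have PE : proj_edge_prob wl wr v1 v2 = 1 - \prod_z (1 - x z).
  rewrite /proj_edge_prob /graph_prob (@proj_prob R nl n (fun e => edge_prob wl wr e) v1 v2 ne).
  congr (_ - _); apply: eq_bigr => z _; by rewrite /edge_prob /= !min_l.
have M1E : moment wr 1 = S1 / n%:R by [].
have M2E : moment wr 2 = S2 / n%:R by [].
have M4E : moment wr 4 = S4 / n%:R by [].
have nz : (n%:R : R) != 0 by rewrite gt_eqF.
have S1z : S1 != 0 by rewrite gt_eqF.
have S2z : S2 != 0 by rewrite gt_eqF.
have pE : p = L * S2.
  rewrite /p /p_pair M1E M2E /L; field; by rewrite nz S1z.
have BE : B = (L * S2) ^+ 3 / 6 + (L ^+ 2 * S4) / 2.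
  rewrite /B pE M4E M2E; field; by rewrite nz S2z.
have [P0 P1 a0 b0 [c0 cab U1 L2 [U3 L4]]] := @bonf R _ (index_enum 'I_n) x x01.
have aE : \sum_(i <- index_enum 'I_n) x i = L * S2.
  rewrite /S2 mulr_sumr; apply: eq_bigr => z _; exact: xE.
have bE : \sum_(i <- index_enum 'I_n) x i ^+ 2 = L ^+ 2 * S4.
  rewrite /S4 mulr_sumr; apply: eq_bigr => z _; rewrite xE; ring.
have rhoLS : L * S2 <= rho.
  rewrite -subr_ge0.
  have -> : rho - L * S2 = (wl v1 * wl v2 / (S1 ^+ 2 * n%:R)) * (C2 * S1 ^+ 2 - S2 * n%:R).
    rewrite /rho /L; field; by rewrite nz S1z.
  apply: mulr_ge0; first by rewrite divr_ge0 ?mulr_ge0 ?exprn_ge0 ?ltW.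
  have -> : C2 * S1 ^+ 2 - S2 * n%:R = n%:R ^+ 2 * (C2 * moment wr 1 ^+ 2 - moment wr 2).
    rewrite M1E M2E; field; by rewrite nz.
  by apply: mulr_ge0; [rewrite exprn_ge0 // ltW | rewrite subr_ge0].
have xrho z : x z <= rho.
  rewrite xE; apply: le_trans rhoLS; apply: ler_wpM2l; first exact: ltW.
  rewrite /S2 (bigD1 z) //=.
  by rewrite lerDl; apply: sumr_ge0 => i _; apply: exprn_ge0; exact: ltW.
have cb : \sum_(i <- index_enum 'I_n) x i ^+ 3 <= rho * \sum_(i <- index_enum 'I_n) x i ^+ 2.
  rewrite mulr_sumr; apply: ler_sum => z _.
  rewrite exprSr [leRHS]mulrC; apply: ler_wpM2l; last exact: xrho.
  by apply: exprn_ge0; case/andP: (x01 z).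
move: U3 L4 cab cb a0 b0 c0; rewrite PE pE BE aE bE /SS3 /SS2.
set a := L * S2; set b := L ^+ 2 * S4; set c := \sum_(i <- _) _.
move=> U3 L4 cab cb a0 b0 c0.
have ab : a * b <= rho * b by rewrite ler_wpM2r.
have a4 : a ^+ 4 <= rho * a ^+ 3 by rewrite exprSr mulrC; apply: ler_wpM2r; [exact: exprn_ge0 | exact: rhoLS].
have a3 : 0 <= a ^+ 3 by rewrite exprn_ge0.
split.
- rewrite ler_norml; apply/andP; split; lra.
- lra.
- exact: rhoLS.
Qed.
End Core.

Theorem mainTheorem4 (R : realType) (delta : R) (hdelta : 0 < delta)
  (nL nR : nat -> nat)
  (wL : forall k, 'I_(nL k) -> R) (wR : forall k, 'I_(nR k) -> R)
  (u1 u2 : forall k, 'I_(nL k))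
  (hnL : nat_to_infty nL) (hnR : nat_to_infty nR)
  (hwL_pos : forall k u, 0 < wL k u) (hwR_pos : forall k v, 0 < wR k v)
  (* Assumption 1 *)
  (hA1 : forall k u v,
     wL k u * wR k v / ((nR k)%:R * moment (wR k) 1) <= 1)
  (* Assumption 2 *)
  (hmaxL : exists C : R, eventually (fun k =>
     forall u, wL k u <= C * powR (nR k)%:R (2^-1 - delta)))
  (hmaxR : exists C : R, eventually (fun k =>
     forall v, wR k v <= C * powR (nR k)%:R (2^-1 - delta)))
  (hminL : exists c : R, 0 < c /\ eventually (fun k => forall u, c <= wL k u))
  (hM2 : exists C : R, eventually (fun k =>
     moment (wR k) 2 <= C * moment (wR k) 1 ^+ 2))
  (hM4 : exists C : R, eventually (fun k =>
     moment (wR k) 4 <= C * powR (nR k)%:R (1 - 2 * delta)))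
  (hdist : forall k, u1 k != u2 k) :
  let p k := p_pair (wL k) (wR k) (u1 k) (u2 k) in
  let B k := (p k / 6 + moment (wR k) 4 /
                 (2 * (nR k)%:R * moment (wR k) 2 ^+ 2)) * p k ^+ 2 in
  (exists C : R, eventually (fun k =>
     `| proj_edge_prob (wL k) (wR k) (u1 k) (u2 k)
        - (p k - p k ^+ 2 / 2) - B k |
       <= C * powR (nR k)%:R (- (2 * delta)) * `| B k |))
  /\ (exists C : R, eventually (fun k =>
     p k <= C * powR (nR k)%:R (- (2 * delta)))).
Proof.
move=> p B.
case: hmaxL => CL [KL hL].
case: hM2 => C2 [K2 h2].
case: (hnR 1%N) => Kn hn.
pose K := maxn KL (maxn K2 Kn).
pose Kc := CL ^+ 2 * `|C2|.
have key k : (K <= k)%N ->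
  [/\ `| proj_edge_prob (wL k) (wR k) (u1 k) (u2 k) - (p k - p k ^+ 2 / 2) - B k |
       <= 2 * Kc * powR (nR k)%:R (- (2 * delta)) * `| B k |
    & p k <= Kc * powR (nR k)%:R (- (2 * delta))].
  move=> hk.
  have hkL : (KL <= k)%N by apply: leq_trans hk; rewrite leq_maxl.
  have hk2 : (K2 <= k)%N by apply: leq_trans hk; rewrite /K (leq_trans (leq_maxl K2 Kn)) // leq_maxr.
  have hkn : (Kn <= k)%N by apply: leq_trans hk; rewrite /K (leq_trans (leq_maxr K2 Kn)) // leq_maxr.
  have n0 := hn k hkn.
  have hM2' : moment (wR k) 2 <= `|C2| * moment (wR k) 1 ^+ 2.
    apply: (le_trans (h2 k hk2)); by apply: ler_wpM2r; [exact: sqr_ge0 | exact: ler_norm].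
  have [hE hB hp] := @core R _ _ _ _ _ _ _ n0 (hwL_pos k) (hwR_pos k) (hA1 k) hM2' (hdist k).
  set t := powR (nR k)%:R (- (2 * delta)).
  set s := powR (nR k)%:R (2^-1 - delta).
  have nn0 : 0 < ((nR k)%:R : R) by rewrite ltr0n.
  have st : s * s / (nR k)%:R = t.
    have cnd (r : R) : (r == 0) ==> ((nR k)%:R != 0 :> R) by apply/implyP => _; rewrite gt_eqF.
    rewrite /s /t -(powRD (cnd _)).
    have -> : 2^-1 - delta + (2^-1 - delta) = 1 + (- (2 * delta)) :> R by field.
    rewrite (powRD (cnd _)) powRr1 ?ltW //; field; by rewrite gt_eqF.
  have rhoK : wL k (u1 k) * wL k (u2 k) * `|C2| / (nR k)%:R <= Kc * t.
    rewrite -st /Kc.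
    have w1 := hL k hkL (u1 k); have w2 := hL k hkL (u2 k).
    have : wL k (u1 k) * wL k (u2 k) <= (CL * s) * (CL * s).
      by apply: ler_pM => //; apply: ltW; exact: hwL_pos.
    move=> hw.
    have -> : CL ^+ 2 * `|C2| * (s * s / (nR k)%:R) = (CL * s) * (CL * s) * `|C2| / (nR k)%:R.
      by rewrite expr2; field; rewrite gt_eqF.
    apply: ler_wpM2r; first by rewrite invr_ge0 ltW.
    by apply: ler_wpM2r.
  have Bk : `|B k| = B k by rewrite ger0_norm.
  split; last exact: le_trans hp rhoK.
  rewrite Bk; apply: (le_trans hE); apply: ler_wpM2r => //.
  rewrite -[2 * Kc * t]mulrA; exact: ler_wpM2l.
split.
- by exists (2 * Kc), K => k hk; case: (key k hk).
- by exists Kc, K => k hk; case: (key k hk).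
Qed.
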